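(* Let $\mathcal{T}\in(\mathbb{R}^4)^{\otimes 4}$ be the symmetric tensor corresponding to the quartic $x^4-3y^4+12x^2yz+12xy^2w$ in the variables $x,y,z,w$. Then $\operatorname{drk}_2\mathcal{T}=\operatorname{sdrk}_2\mathcal{T}=9$.
   Context: All tensors are real. Symmetric tensors $\mathcal{T}\in(\mathbb{R}^I)^{\otimes d}$ correspond bijectively to homogeneous degree $d$ polynomials via $\mathcal{T}\leftrightarrow\sum_{k_1,\dots,k_d\in I}\mathcal{T}(k_1|\dots|k_d)x_{k_1}\cdots x_{k_d}$. For a symmetric $\mathcal{T}\in(\mathbb{R}^I)^{\otimes d}$ and $1\le j\le d$, the slice space $\mathcal{L}_j\subset(\mathbb{R}^I)^{\otimes j}$ is the linear span of all order $j$ slices obtained by fixing the last $d-j$ indices of $\mathcal{T}$ to arbitrary values. $\operatorname{drk}_j\mathcal{T}$ is the smallest $r$ such that there are $r$ decomposable tensors $v_1\otimes\cdots\otimes v_j$ whose linear span contains $\mathcal{L}_j$; $\operatorname{sdrk}_j\mathcal{T}$ is the smallest $r$ such that there are $r$ symmetric decomposable tensors $\lambda v^{\otimes j}$ whose linear span contains $\mathcal{L}_j$. *)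

(* Defs.v *)
From HB Require Import structures.
From mathcomp Require Import all_boot all_order all_algebra.
From mathcomp Require Import reals.
Set Implicit Arguments. Unset Strict Implicit. Unset Printing Implicit Defensive.
Import Order.TTheory GRing.Theory Num.Theory.
Local Open Scope ring_scope.

Section Defs.
Variable R : realType.

Definition tensor4 := 'I_4 -> 'I_4 -> 'I_4 -> 'I_4 -> R.

(* Coefficient of x^a y^b z^c w^d in x^4 - 3y^4 + 12x^2yz + 12xy^2w
   (variables x,y,z,w <-> indices 0,1,2,3). *)
Definition quartic_coef (e : nat * nat * nat * nat) : R :=
  match e with
  | (4, 0, 0, 0)%N => 1
  | (0, 4, 0, 0)%N => -3
  | (2, 1, 1, 0)%N => 12
  | (1, 2, 0, 1)%N => 12
  | _ => 0
  end.

Definition idx_count (k1 k2 k3 k4 : 'I_4) (i : nat) : nat :=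
  ((k1 == i :> nat) + (k2 == i :> nat) + (k3 == i :> nat) + (k4 == i :> nat))%N.

(* The symmetric tensor corresponding to a quartic with coefficient function
   coef: T(k) = coef(exponent of k) / (number of index tuples with that
   exponent vector), so that sum_k T(k) x_k1 x_k2 x_k3 x_k4 = the quartic. *)
Definition sym_tensor_of_quartic (coef : nat * nat * nat * nat -> R) : tensor4 :=
  fun k1 k2 k3 k4 =>
    let c := idx_count k1 k2 k3 k4 in
    coef (c 0, c 1, c 2, c 3)%N /
      ((4`! %/ ((c 0)`! * (c 1)`! * (c 2)`! * (c 3)`!))%N)%:R.

Definition T_quartic : tensor4 := sym_tensor_of_quartic quartic_coef.

Definition slice2 (T : tensor4) (k3 k4 : 'I_4) : 'M[R]_4 :=
  \matrix_(i, j) T i j k3 k4.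

Definition slice_space2 (T : tensor4) : {vspace 'M[R]_4} :=
  <<[seq slice2 T k.1 k.2 | k : 'I_4 * 'I_4]>>%VS.

Definition dec2 (u v : 'rV[R]_4) : 'M[R]_4 := u^T *m v.

Definition drk2_bound (T : tensor4) (r : nat) : Prop :=
  exists s : seq ('rV[R]_4 * 'rV[R]_4),
    size s = r /\ (slice_space2 T <= <<[seq dec2 p.1 p.2 | p <- s]>>)%VS.

Definition sdrk2_bound (T : tensor4) (r : nat) : Prop :=
  exists s : seq (R * 'rV[R]_4),
    size s = r /\ (slice_space2 T <= <<[seq p.1 *: dec2 p.2 p.2 | p <- s]>>)%VS.

End Defs.

Definition is_least (P : nat -> Prop) (n : nat) : Prop :=
  P n /\ forall m, P m -> (n <= m)%N.

Definition drk2 (R : realType) (T : tensor4 R) (r : nat) : Prop :=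
  is_least (drk2_bound T) r.
Definition sdrk2 (R : realType) (T : tensor4 R) (r : nat) : Prop :=
  is_least (sdrk2_bound T) r.

(* Main.v *)
Require Import Defs.
From HB Require Import structures.
From mathcomp Require Import all_boot all_order all_algebra.
From mathcomp Require Import reals.
From mathcomp Require Import ring lra zify.
From Stdlib Require Import Lia.
Set Implicit Arguments. Unset Strict Implicit. Unset Printing Implicit Defensive.
Import Order.TTheory GRing.Theory Num.Theory.
Local Open Scope ring_scope.

Section A.
Variable R : realType.

Definition Tv (i j k l : nat) : R :=
  let c := fun t => ((i == t) + (j == t) + (k == t) + (l == t))%N in
  if (c 0%N == 4%N) then 1 else if (c 1%N == 4%N) then -3
  else if ((c 0%N == 2%N) && (c 1%N == 1%N) && (c 2%N == 1%N)) then 1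
  else if ((c 0%N == 1%N) && (c 1%N == 2%N) && (c 3%N == 1%N)) then 1 else 0.

Lemma TqE (i j k l : 'I_4) : T_quartic R i j k l = Tv i j k l.
Proof.
rewrite /T_quartic /sym_tensor_of_quartic /idx_count /Tv.
have h12 : (12%:R : R) != 0 by rewrite pnatr_eq0.
case: i => [[|[|[|[|//]]]] ?]; case: j => [[|[|[|[|//]]]] ?];
case: k => [[|[|[|[|//]]]] ?]; case: l => [[|[|[|[|//]]]] ?] => /=;
rewrite ?mul0r ?divr1 ?divff //.
Qed.
End A.

Section M.
Variable R : realType.

Definition gent (al be ga p q rr : R) (i j : nat) : R :=
 match i, j return R with
 | 0%N,0%N => al | 1%N,1%N => be | 0%N,1%N => ga | 1%N,0%N => ga
 | 0%N,2%N => rr | 2%N,0%N => rr | 1%N,3%N => rr | 3%N,1%N => rr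
 | 1%N,2%N => p | 2%N,1%N => p | 0%N,3%N => q | 3%N,0%N => q | _,_ => 0%R end.
Definition Gm al be ga p q rr : 'M[R]_4 := \matrix_(i,j) gent al be ga p q rr i j.

Definition bb (s : R) (k m : nat) : R :=
  let d := (1 - s ^+ 3)^-1 in
  match k, m return R with 0%N,0%N => d | 0%N,1%N => - s^+2 * d | 1%N,0%N => - s * d | 1%N,1%N => d | _,_ => 0%R end.
Definition ww (s g1 g2 g3 : R) (k l : nat) : R :=
  - (bb s k 0 * (bb s l 0 * g1 + bb s l 1 * g3) + bb s k 1 * (bb s l 0 * g3 + bb s l 1 * g2)).
Definition yent (s g1 g2 g3 : R) (i j : nat) : R :=
  match i, j return R with
  | 0%N,2%N => bb s 0 0 | 0%N,3%N => bb s 1 0 | 1%N,2%N => bb s 0 1 | 1%N,3%N => bb s 1 1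
  | 2%N,0%N => bb s 0 0 | 2%N,1%N => bb s 0 1 | 3%N,0%N => bb s 1 0 | 3%N,1%N => bb s 1 1
  | 2%N,2%N => ww s g1 g2 g3 0 0 | 2%N,3%N => ww s g1 g2 g3 0 1
  | 3%N,2%N => ww s g1 g2 g3 1 0 | 3%N,3%N => ww s g1 g2 g3 1 1 | _,_ => 0%R end.
Definition Ym s g1 g2 g3 : 'M[R]_4 := \matrix_(i,j) yent s g1 g2 g3 i j.

Ltac expand := do ![rewrite mxE | rewrite big_ord_recr | rewrite big_ord0 ]; rewrite /=.

Lemma X0Y (s g1 g2 g3 : R) : 1 - s ^+ 3 != 0 ->
  Gm g1 g2 g3 s (s ^+ 2) 1 *m Ym s g1 g2 g3 = 1%:M.
Proof.
move=> hs; apply/matrixP => i j.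
rewrite !mxE !big_ord_recr big_ord0 /= !mxE.
case: i => [[|[|[|[|//]]]] ?]; case: j => [[|[|[|[|//]]]] ?];
rewrite /= /ww /bb /=; field; exact: hs.
Qed.

Lemma mul3E (A B C : 'M[R]_4) i j :
  (A *m B *m C) i j = \sum_(k < 4) \sum_(l < 4) A i l * B l k * C k j.
Proof.
rewrite mxE; apply: eq_bigr => k _; rewrite mxE big_distrl.
by apply: eq_bigr.
Qed.

Lemma sum4 (F : nat -> R) : \sum_(k < 4) F k = F 0%N + F 1%N + F 2%N + F 3%N.
Proof. by rewrite !big_ord_recr big_ord0 /= add0r. Qed.

Lemma Kent (s a1 a2 a3 b1 b2 b3 g1 g2 g3 : R) : 1 - s ^+ 3 != 0 ->
  let Y := Ym s g1 g2 g3 in let Xa := Gm a1 a2 a3 1 0 0 in let Xb := Gm b1 b2 b3 0 1 0 in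
  let K := Xa *m Y *m Xb - Xb *m Y *m Xa in
  forall i j : 'I_4, K i j = \sum_(k < 4) \sum_(l < 4)
   (gent a1 a2 a3 1 0 0 i l * yent s g1 g2 g3 l k * gent b1 b2 b3 0 1 0 k j
   - gent b1 b2 b3 0 1 0 i l * yent s g1 g2 g3 l k * gent a1 a2 a3 1 0 0 k j).
Proof.
move=> hs Y Xa Xb K i j.
rewrite /K mxE mul3E mxE mul3E -sumrB; apply: eq_bigr => k _; rewrite -sumrB.
by apply: eq_bigr => l _; rewrite !mxE.
Qed.

Definition o0 : 'I_4 := @Ordinal 4 0 isT.
Definition o1 : 'I_4 := @Ordinal 4 1 isT.
Definition o2 : 'I_4 := @Ordinal 4 2 isT.
Definition o3 : 'I_4 := @Ordinal 4 3 isT.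

Lemma Kvals (s a1 a2 a3 b1 b2 b3 g1 g2 g3 : R) : 1 - s ^+ 3 != 0 ->
  let Y := Ym s g1 g2 g3 in let Xa := Gm a1 a2 a3 1 0 0 in let Xb := Gm b1 b2 b3 0 1 0 in
  let K := Xa *m Y *m Xb - Xb *m Y *m Xa in
  let c := (1 - s ^+ 3)^-1 in
  K o0 o2 = - c /\ K o0 o3 = 0 /\ K o1 o2 = 0 /\ K o1 o3 = c /\ K o2 o0 = c /\
      K o2 o2 = 0 /\ K o2 o3 = 0.
Proof.
move=> hs Y Xa Xb K c.
rewrite !(Kent _ _ _ _ _ _ _ _ _ hs) !big_ord_recr !big_ord0 /= /yent /ww /bb /c /=.
by do ![split]; field; exact: hs.
Qed.

Lemma rank3 (K : 'M[R]_4) (c : R) : c != 0 ->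
  K o0 o2 = - c -> K o0 o3 = 0 -> K o1 o2 = 0 -> K o1 o3 = c -> K o2 o0 = c ->
  K o2 o2 = 0 -> K o2 o3 = 0 -> (3 <= \rank K)%N.
Proof.
move=> hc h02 h03 h12 h13 h20 h22 h23.
pose rs := fun i : 'I_3 => nth o0 [:: o0; o1; o2] i.
pose cs := fun i : 'I_3 => nth o0 [:: o0; o2; o3] i.
pose S := mxsub rs cs K.
have rS : (\rank S <= \rank K)%N.
  rewrite /S mxsubrc rowsubE.
  have -> : colsub cs K = K *m colsub cs 1%:M by rewrite mulmx_colsub mulmx1.
  apply: leq_trans (mxrankM_maxr _ _) _; exact: mxrankM_maxl.
pose a := K o0 o0. pose b := K o1 o0.
pose V : 'M[R]_3 := \matrix_(i, j) (match nat_of_ord i, nat_of_ord j return R with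
   | 0%N, 2%N => c^-1 | 1%N, 0%N => - c^-1 | 1%N, 2%N => a / c ^+ 2
   | 2%N, 1%N => c^-1 | 2%N, 2%N => - b / c ^+ 2 | _, _ => 0%R end).
have SV : S *m V = 1%:M.
  apply/matrixP => i j; rewrite !mxE !big_ord_recr big_ord0 /= !mxE.
  case: i => [[|[|[|//]]] ?]; case: j => [[|[|[|//]]] ?];
  rewrite /= -/a -/b ?h02 ?h03 ?h12 ?h13 ?h20 ?h22 ?h23; field; exact: hc.
have := mxrank_unit (proj1 (mulmx1_unit SV)).
by move=> e; move: rS; rewrite e.
Qed.
End M.

Section S.
Variable R : realType.

Lemma strassen (r : nat) (P : 'M[R]_(4,r)) (Q : 'M[R]_(r,4)) (d0 da db : 'rV[R]_r)
  (z : 'I_r -> bool) (f : 'I_3 -> 'I_r) (Y : 'M[R]_4) :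
  (r <= 8)%N -> injective f -> (forall j, z (f j)) ->
  (forall i, z i -> [/\ d0 0 i = 0, da 0 i = 0 & db 0 i = 0]) ->
  (forall i, ~~ z i -> d0 0 i != 0) ->
  (P *m diag_mx d0 *m Q) *m Y = 1%:M ->
  (\rank ((P *m diag_mx da *m Q) *m Y *m (P *m diag_mx db *m Q)
         - (P *m diag_mx db *m Q) *m Y *m (P *m diag_mx da *m Q))%R <= 2)%N.
Proof.
move=> r8 finj fz zd nzd XY.
pose Pi : 'M[R]_r := diag_mx (\row_i (~~ z i)%:R).
have PiD (d : 'rV[R]_r) : (forall i, z i -> d 0 i = 0) -> Pi *m diag_mx d = diag_mx d.
  move=> hd; rewrite mul_diag_mx; apply/matrixP => i j; rewrite !mxE.
  by case: (boolP (z i)) => zi /=; [rewrite hd // mul0r mul0rn | rewrite mul1r].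
have DPi (d : 'rV[R]_r) : (forall i, z i -> d 0 i = 0) -> diag_mx d *m Pi = diag_mx d.
  by move=> hd; rewrite -diag_mx_comm PiD.
have zd0 i : z i -> d0 0 i = 0 by case/zd.
have zda i : z i -> da 0 i = 0 by case/zd.
have zdb i : z i -> db 0 i = 0 by case/zd.
have PiPi : Pi *m Pi = Pi by rewrite PiD // => i; rewrite mxE => ->.
pose P' := P *m Pi.
have PD (d : 'rV[R]_r) : (forall i, z i -> d 0 i = 0) -> P *m diag_mx d = P' *m diag_mx d.
  by move=> hd; rewrite /P' -mulmxA PiD.
rewrite !PD //.
pose N := diag_mx d0 *m Q *m Y.
pose M := N *m P'.
have P'N : P' *m N = 1%:M by rewrite /N !mulmxA -PD.
have MM : M *m M = M by rewrite /M mulmxA -(mulmxA N) P'N mulmx1.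
have PiM : Pi *m M = M by rewrite /M /N !mulmxA PiD.
have MPi : M *m Pi = M by rewrite /M /P' -!mulmxA PiPi.
pose F : 'M[R]_(3, r) := rowsub f 1%:M.
have FPi : F *m Pi = 0.
  rewrite mul_mx_diag; apply/matrixP => j i; rewrite !mxE.
  by case: eqP => [<-|_]; rewrite ?fz ?mulr0 ?mul0r.
have FN : F *m N = 0.
  rewrite /N !mulmxA mul_mx_diag.
  have -> : (\matrix_(i, j) (F i j * d0 0 j)) = 0.
    apply/matrixP => j i; rewrite !mxE.
    case: eqP => [<-|_]; last by rewrite mul0r.
    by rewrite zd0 ?mulr0.
  by rewrite !mul0mx.
have FFt : F *m F^T = 1%:M.
  apply/matrixP => j j'; rewrite !mxE (bigD1 (f j)) //= big1 ?addr0.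
    rewrite !mxE eqxx mul1r (inj_eq finj) eq_sym.
    by case: eqP.
  by move=> i /negPf ni; rewrite !mxE eq_sym ni mul0r.
have P'Ft : P' *m F^T = 0.
  have PiT : Pi^T = Pi by exact: tr_diag_mx.
  by rewrite /P' -mulmxA -PiT -trmx_mul FPi trmx0 mulmx0.
pose Yb := col_mx P' F.
pose Zb := row_mx N F^T.
have YZ : Yb *m Zb = 1%:M.
  by rewrite /Yb /Zb mul_col_row P'N P'Ft FN FFt -scalar_mx_block.
have rY : (7 <= \rank Yb)%N.
  have := mxrankM_maxl Yb Zb; rewrite YZ mxrank1; exact.
pose J := M + (1%:M - Pi).
have YJ : Yb *m J = Yb.
  rewrite /Yb mul_col_mx /J !mulmxDr !mulmxN !mulmx1.
  rewrite /M mulmxA P'N mul1mx /P' -mulmxA PiPi subrr addr0.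
  by rewrite mulmxA FN mul0mx FPi subr0 add0r.
have rJ : (7 <= \rank J)%N.
  apply: leq_trans rY _; rewrite -{1}YJ; exact: mxrankM_maxr.
pose E := Pi - M.
have EJ : E *m J = 0.
  rewrite /E /J !mulmxDr !mulmxN !mulmxBl !mulmx1 PiM MM PiPi MPi.
  by rewrite !subrr add0r.
have rE : (\rank E <= 1)%N.
  have := mulmx0_rank_max EJ; lia.
pose ea := \row_i (da 0 i / d0 0 i).
pose eb := \row_i (db 0 i / d0 0 i).
have eD (d : 'rV[R]_r) : (forall i, z i -> d 0 i = 0) ->
    diag_mx (\row_i (d 0 i / d0 0 i)) *m diag_mx d0 = diag_mx d.
  move=> hd; rewrite mulmx_diag; congr diag_mx; apply/rowP => i; rewrite !mxE.
  case: (boolP (z i)) => zi; first by rewrite hd // !mul0r.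
  by rewrite divfK // nzd.
have key (d : 'rV[R]_r) : (forall i, z i -> d 0 i = 0) ->
    diag_mx d *m Q *m Y *m P' = diag_mx (\row_i (d 0 i / d0 0 i)) *m M.
  by move=> hd; rewrite /M /N -(eD d hd) !mulmxA.
have sym : diag_mx ea *m Pi *m diag_mx db = diag_mx eb *m Pi *m diag_mx da.
  rewrite !mulmx_diag; congr diag_mx; apply/rowP => i; rewrite !mxE.
  ring.
have -> : P' *m diag_mx da *m Q *m Y *m (P' *m diag_mx db *m Q) -
          P' *m diag_mx db *m Q *m Y *m (P' *m diag_mx da *m Q) =
          P' *m (diag_mx eb *m E *m diag_mx da - diag_mx ea *m E *m diag_mx db) *m Q.
  have t1 : P' *m diag_mx da *m Q *m Y *m (P' *m diag_mx db *m Q) =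
     P' *m (diag_mx ea *m M *m diag_mx db) *m Q by rewrite /ea -key // !mulmxA.
  have t2 : P' *m diag_mx db *m Q *m Y *m (P' *m diag_mx da *m Q) =
     P' *m (diag_mx eb *m M *m diag_mx da) *m Q by rewrite /eb -key // !mulmxA.
  have m1 (a b : 'rV[R]_r) : diag_mx a *m M *m diag_mx b =
      diag_mx a *m Pi *m diag_mx b - diag_mx a *m E *m diag_mx b.
    by rewrite /E mulmxBr mulmxBl opprB addrC subrK.
  rewrite t1 t2 !m1 sym -mulmxBl -mulmxBr; congr (_ *m _ *m _).
  by rewrite opprB addrC addrA subrK.
apply: leq_trans (mxrankM_maxl _ _) _.
apply: leq_trans (mxrankM_maxr _ _) _.
apply: leq_trans (mxrank_add _ _) _; rewrite mxrank_opp.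
have h (a b : 'rV[R]_r) : (\rank (diag_mx a *m E *m diag_mx b) <= 1)%N.
  apply: leq_trans (mxrankM_maxl _ _) _.
  apply: leq_trans (mxrankM_maxr _ _) _; exact: rE.
exact: (leq_add (h eb da) (h ea db)).
Qed.
End S.

Section B.
Variable R : realType.
Local Notation Gm := (@Gm R).

Definition sl (k l : nat) : 'M[R]_4 :=
  match k, l with
  | 0%N, 0%N => Gm 1 0 0 1 0 0
  | 1%N, 1%N => Gm 0 (-3) 0 0 1 0
  | 0%N, 1%N | 1%N, 0%N => Gm 0 0 0 0 0 1
  | 0%N, 2%N | 2%N, 0%N => Gm 0 0 1 0 0 0
  | 1%N, 2%N | 2%N, 1%N => Gm 1 0 0 0 0 0
  | 0%N, 3%N | 3%N, 0%N => Gm 0 1 0 0 0 0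
  | 1%N, 3%N | 3%N, 1%N => Gm 0 0 1 0 0 0
  | _, _ => Gm 0 0 0 0 0 0 end.

Lemma sliceE (k l : 'I_4) : slice2 (T_quartic R) k l = sl k l.
Proof.
apply/matrixP => i j; rewrite !mxE TqE /Tv.
case: k => [[|[|[|[|//]]]] ?]; case: l => [[|[|[|[|//]]]] ?];
case: i => [[|[|[|[|//]]]] ?]; case: j => [[|[|[|[|//]]]] ?]; rewrite /= ?mxE //.
Qed.

Definition rv (a b c d : R) : 'rV[R]_4 := \row_i nth 0 [:: a; b; c; d] i.

Lemma dec2E (u v : 'rV[R]_4) a b : dec2 u v a b = u 0 a * v 0 b.
Proof. by rewrite /dec2 mxE big_ord1 !mxE. Qed.

Definition V9 : seq 'rV[R]_4 := [:: rv 1 0 0 0; rv 0 1 0 0; rv 0 0 1 0; rv 0 0 0 1;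
  rv 1 1 0 0; rv 0 1 1 0; rv 1 0 0 1; rv 1 0 1 0; rv 0 1 0 1].
Definition S9 : seq (R * 'rV[R]_4) := [seq (1, v) | v <- V9].
Definition Sp9 := <<[seq p.1 *: dec2 p.2 p.2 | p <- S9]>>%VS.

Lemma inSp9 v : v \in V9 -> dec2 v v \in Sp9.
Proof.
move=> hv; apply: memv_span; apply/mapP; exists (1, v); last by rewrite scale1r.
by apply/mapP; exists v.
Qed.

Lemma GmSp9 a1 a2 a3 a4 a5 a6 : Gm a1 a2 a3 a4 a5 a6 \in Sp9.
Proof.
pose d (v : 'rV[R]_4) := dec2 v v.
have e : Gm a1 a2 a3 a4 a5 a6 =
   a1 *: d (rv 1 0 0 0) + a2 *: d (rv 0 1 0 0)
 + a3 *: (d (rv 1 1 0 0) - d (rv 1 0 0 0) - d (rv 0 1 0 0))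
 + a4 *: (d (rv 0 1 1 0) - d (rv 0 1 0 0) - d (rv 0 0 1 0))
 + a5 *: (d (rv 1 0 0 1) - d (rv 1 0 0 0) - d (rv 0 0 0 1))
 + a6 *: (d (rv 1 0 1 0) - d (rv 1 0 0 0) - d (rv 0 0 1 0)
          + d (rv 0 1 0 1) - d (rv 0 1 0 0) - d (rv 0 0 0 1)).
  apply/matrixP => i j; rewrite /d !(mxE, big_ord1).
  case: i => [[|[|[|[|//]]]] ?]; case: j => [[|[|[|[|//]]]] ?]; rewrite /= ?mxE /=; ring.
rewrite e; have I v : v \in V9 -> d v \in Sp9 by exact: inSp9.
repeat first [ apply: memvB | apply: memvD | apply: memvN | apply: memvZ
              | (apply: I; by rewrite !inE eqxx ?orbT) ].
Qed.

Lemma ub : sdrk2_bound (T_quartic R) 9.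
Proof.
exists S9; split; first by [].
apply/span_subvP => x /mapP [[k l] _ ->] /=; rewrite sliceE.
by case: k => [[|[|[|[|//]]]] ?]; case: l => [[|[|[|[|//]]]] ?]; apply: GmSp9.
Qed.

Lemma sd_d (T : tensor4 R) n : sdrk2_bound T n -> drk2_bound T n.
Proof.
case=> s [hs hsub]; exists [seq (p.1 *: p.2, p.2) | p <- s]; split.
  by rewrite size_map.
rewrite -map_comp; apply: (subv_trans hsub); apply/span_subvP => x /mapP [p ps ->].
apply: memv_span; apply/mapP; exists p => //=.
by rewrite /dec2 linearZ /= scalemxAl.
Qed.
End B.

Section C.
Variable R : realType.

Lemma nonroot (p : {poly R}) : p != 0 -> exists x, p.[x] != 0.
Proof.
move=> hp; pose rs := [seq i%:R | i <- iota 0 (size p)] : seq R.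
have urs : uniq rs.
  rewrite map_inj_uniq ?iota_uniq // => i j /eqP; rewrite eqr_nat => /eqP.
  done.
case h: (all (root p) rs).
  by have := max_poly_roots hp h urs; rewrite size_map size_iota ltnn.
by case/allPn: h => x _ hx; exists x.
Qed.

Lemma gen r (a b c : 'I_r -> R) : exists s : R, 1 - s ^+ 3 != 0 /\
  forall i, ((a i != 0) || (b i != 0) || (c i != 0)) -> s * a i + s ^+ 2 * b i + c i != 0.
Proof.
pose q i : {poly R} := a i *: 'X + b i *: 'X^2 + (c i)%:P.
pose nz i := (a i != 0) || (b i != 0) || (c i != 0).
pose p := (1 - 'X^3) * \prod_(i | nz i) q i.
have hp : p != 0.
  apply: mulf_neq0.
    apply/eqP => /(congr1 (fun p : {poly R} => p`_0)).
    by rewrite coefB coef1 coefXn /= subr0 coef0 => /eqP; rewrite oner_eq0.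
  apply/prodf_neq0 => i nzi; apply/eqP => q0.
  have h0 := congr1 (fun p : {poly R} => p`_0) q0.
  have h1 := congr1 (fun p : {poly R} => p`_1) q0.
  have h2 := congr1 (fun p : {poly R} => p`_2) q0.
  move: h0 h1 h2; rewrite /q !coefD !coefZ !coefX !coefXn !coefC /= ?coef0.
  rewrite !mulr0 !mulr1 !add0r !addr0 => hc ha hb.
  by move: nzi; rewrite /nz ha hb hc eqxx.
have [s hs] := nonroot hp.
move: hs; rewrite /p hornerM horner_prod mulf_eq0 negb_or => /andP [h1 h2].
exists s; split.
  by move: h1; rewrite !hornerE.
move=> i nzi; move/prodf_neq0: h2 => /(_ i nzi).
rewrite /q !hornerE => h.
suff -> : s * a i + s ^+ 2 * b i + c i = a i * s + b i * s * s + c i by exact: h.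
by rewrite expr2; ring.
Qed.

Lemma sel3 r (A : 'M[R]_(r, 3)) : \rank A = 3 ->
  exists f : 'I_3 -> 'I_r, injective f /\ rowsub f A \in unitmx.
Proof.
move=> hA.
have := maxrowsub_free A; have := @maxrankfun_inj _ _ _ A.
move: (maxrankfun A); rewrite hA => g ginj gfree.
by exists g; split => //; rewrite -row_free_unit.
Qed.

Definition Pm r (s : seq ('rV[R]_4 * 'rV[R]_4)) : 'M[R]_(4, r) :=
  \matrix_(a, i) (nth (0, 0) s i).1 0 a.
Definition Qm r (s : seq ('rV[R]_4 * 'rV[R]_4)) : 'M[R]_(r, 4) :=
  \matrix_(i, b) (nth (0, 0) s i).2 0 b.

Lemma FE r (P : 'M[R]_(4, r)) (Q : 'M[R]_(r, 4)) (d : 'rV[R]_r) (a b : 'I_4) :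
  (P *m diag_mx d *m Q) a b = \sum_i P a i * d 0 i * Q i b.
Proof. by rewrite mxE; apply: eq_bigr => i _; rewrite mul_mx_diag mxE. Qed.

Lemma decomp (s : seq ('rV[R]_4 * 'rV[R]_4)) (A : 'M[R]_4) :
  A \in <<[seq dec2 p.1 p.2 | p <- s]>>%VS ->
  exists w : 'rV[R]_(size [seq dec2 p.1 p.2 | p <- s]),
    A = Pm _ s *m diag_mx w *m Qm _ s.
Proof.
move=> hA; have := @coord_span _ _ _ (in_tuple [seq dec2 p.1 p.2 | p <- s]) A hA.
set X := in_tuple _ => e.
exists (\row_i coord X i A); rewrite {1}e.
apply/matrixP => a b; rewrite FE summxE; apply: eq_bigr => i _.
have hi : (i < size s)%N by rewrite -(size_map (fun p : 'rV[R]_4 * 'rV[R]_4 => dec2 p.1 p.2)) ltn_ord.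
rewrite !mxE (nth_map (0, 0)) // dec2E; ring.
Qed.

Lemma Lin r (P : 'M[R]_(4, r)) (Q : 'M[R]_(r, 4)) (w1 w2 w3 w4 w5 w6 : 'rV[R]_r) :
  P *m diag_mx w1 *m Q = @Gm R 1 0 0 0 0 0 ->
  P *m diag_mx w2 *m Q = @Gm R 0 1 0 0 0 0 ->
  P *m diag_mx w3 *m Q = @Gm R 0 0 1 0 0 0 ->
  P *m diag_mx w4 *m Q = @Gm R 0 0 0 1 0 0 ->
  P *m diag_mx w5 *m Q = @Gm R 0 0 0 0 1 0 ->
  P *m diag_mx w6 *m Q = @Gm R 0 0 0 0 0 1 ->
  forall (y1 y2 y3 y4 y5 y6 : R) (d : 'rV[R]_r),
  (forall i, d 0 i = y1 * w1 0 i + y2 * w2 0 i + y3 * w3 0 i + y4 * w4 0 i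
                     + y5 * w5 0 i + y6 * w6 0 i) ->
  P *m diag_mx d *m Q = @Gm R y1 y2 y3 y4 y5 y6.
Proof.
move=> h1 h2 h3 h4 h5 h6 y1 y2 y3 y4 y5 y6 d hd; apply/matrixP => a b.
have -> : (P *m diag_mx d *m Q) a b =
   y1 * (P *m diag_mx w1 *m Q) a b + y2 * (P *m diag_mx w2 *m Q) a b
 + y3 * (P *m diag_mx w3 *m Q) a b + y4 * (P *m diag_mx w4 *m Q) a b
 + y5 * (P *m diag_mx w5 *m Q) a b + y6 * (P *m diag_mx w6 *m Q) a b.
  rewrite !FE !mulr_sumr -!big_split; apply: eq_bigr => i _ /=; rewrite hd; ring.
rewrite h1 h2 h3 h4 h5 h6 !mxE.
by case: a => [[|[|[|[|//]]]] ?]; case: b => [[|[|[|[|//]]]] ?]; rewrite /=; ring.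
Qed.
End C.

Section D.
Variable R : realType.


Lemma GmD (x1 x2 x3 x4 x5 x6 y1 y2 y3 y4 y5 y6 : R) :
  Gm x1 x2 x3 x4 x5 x6 + Gm y1 y2 y3 y4 y5 y6 =
  Gm (x1 + y1) (x2 + y2) (x3 + y3) (x4 + y4) (x5 + y5) (x6 + y6).
Proof.
apply/matrixP => a b; rewrite !mxE.
by case: a => [[|[|[|[|//]]]] ?]; case: b => [[|[|[|[|//]]]] ?]; rewrite /= ?addr0.
Qed.

Lemma GmZ (a x1 x2 x3 x4 x5 x6 : R) :
  a *: Gm x1 x2 x3 x4 x5 x6 = Gm (a * x1) (a * x2) (a * x3) (a * x4) (a * x5) (a * x6).
Proof.
apply/matrixP => i j; rewrite !mxE.
by case: i => [[|[|[|[|//]]]] ?]; case: j => [[|[|[|[|//]]]] ?]; rewrite /= ?mulr0.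
Qed.

Lemma Ek_in (V : {vspace 'M[R]_4}) : (slice_space2 (T_quartic R) <= V)%VS ->
  [/\ @Gm R 1 0 0 0 0 0 \in V, @Gm R 0 1 0 0 0 0 \in V, @Gm R 0 0 1 0 0 0 \in V,
      @Gm R 0 0 0 1 0 0 \in V & (@Gm R 0 0 0 0 1 0 \in V /\ @Gm R 0 0 0 0 0 1 \in V)].
Proof.
move=> hsub.
have mem (k l : 'I_4) : sl R k l \in V.
  rewrite -sliceE; apply: (subvP hsub); apply: memv_span; apply/mapP.
  by exists (k, l) => //; rewrite mem_enum.
have e1 : @Gm R 1 0 0 0 0 0 \in V := mem o1 o2.
have e2 : @Gm R 0 1 0 0 0 0 \in V := mem o0 o3.
have e3 : @Gm R 0 0 1 0 0 0 \in V := mem o0 o2.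
have e6 : @Gm R 0 0 0 0 0 1 \in V := mem o0 o1.
have e00 : @Gm R 1 0 0 1 0 0 \in V := mem o0 o0.
have e11 : @Gm R 0 (-3) 0 0 1 0 \in V := mem o1 o1.
split => //; last split => //.
  have -> : @Gm R 0 0 0 1 0 0 = Gm 1 0 0 1 0 0 - Gm 1 0 0 0 0 0.
    by rewrite -scaleN1r GmZ GmD; congr Gm; ring.
  exact: memvB.
have -> : @Gm R 0 0 0 0 1 0 = Gm 0 (-3) 0 0 1 0 + 3 *: Gm 0 1 0 0 0 0.
  by rewrite GmZ GmD; congr Gm; ring.
by rewrite memvD // memvZ.
Qed.

Definition p0 : 'I_3 := @Ordinal 3 0 isT.
Definition p1 : 'I_3 := @Ordinal 3 1 isT.
Definition p2 : 'I_3 := @Ordinal 3 2 isT.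

Lemma q3 (q : 'I_3) : [\/ q = p0, q = p1 | q = p2].
Proof. by case: q => [[|[|[|//]]] ?]; [constructor 1|constructor 2|constructor 3]; apply: val_inj. Qed.

Lemma sum3 (F : 'I_3 -> R) : \sum_(k < 3) F k = F p0 + F p1 + F p2.
Proof.
rewrite !big_ord_recr big_ord0 /= add0r.
have -> : widen_ord (leqnSn 2) (widen_ord (leqnSn 1) ord_max) = p0 by apply: val_inj.
have -> : widen_ord (leqnSn 2) ord_max = p1 by apply: val_inj.
by have -> : (ord_max : 'I_3) = p2 by apply: val_inj.
Qed.

Lemma lb (s : seq ('rV[R]_4 * 'rV[R]_4)) :
  (slice_space2 (T_quartic R) <= <<[seq dec2 p.1 p.2 | p <- s]>>)%VS -> (9 <= size s)%N.
Proof.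
move=> hsub; rewrite leqNgt; apply/negP => hs8.
have [m1 m2 m3 m4 [m5 m6]] := Ek_in hsub.
have [w1 h1] := decomp m1; have [w2 h2] := decomp m2; have [w3 h3] := decomp m3.
have [w4 h4] := decomp m4; have [w5 h5] := decomp m5; have [w6 h6] := decomp m6.
move: (size _) w1 w2 w3 w4 w5 w6 h1 h2 h3 h4 h5 h6 (size_map (fun p : 'rV[R]_4 * 'rV[R]_4 => dec2 p.1 p.2) s).
move=> r w1 w2 w3 w4 w5 w6 h1 h2 h3 h4 h5 h6 hr.
have r8 : (r <= 8)%N by rewrite hr -ltnS.
set P := Pm r s in h1 h2 h3 h4 h5 h6; set Q := Qm r s in h1 h2 h3 h4 h5 h6.
have LinP := Lin (esym h1) (esym h2) (esym h3) (esym h4) (esym h5) (esym h6).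
pose Cqt : 'M[R]_(r, 3) := \matrix_(i, q) (nth 0 [:: w1; w2; w3] q) 0 i.
pose Cbt : 'M[R]_(r, 3) := \matrix_(i, q) (nth 0 [:: w4; w5; w6] q) 0 i.
have rq : \rank Cqt = 3.
  rewrite -mxrank_tr; apply/eqP; rewrite -/(row_free Cqt^T) -kermx_eq0.
  apply/eqP/row_matrixP => k; rewrite row0.
  set y := row k (kermx Cqt^T).
  have y0 : y *m Cqt^T = 0 by rewrite /y -row_mul mulmx_ker row0.
  clearbody y.
  have := LinP (y 0 p0) (y 0 p1) (y 0 p2) 0 0 0 (y *m Cqt^T).
  rewrite y0 linear0 mulmx0 mul0mx => /(_ _)/esym/matrixP H.
  have : forall i, (0 : 'rV[R]_r) 0 i = y 0 p0 * w1 0 i + y 0 p1 * w2 0 i + y 0 p2 * w3 0 i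
       + 0 * w4 0 i + 0 * w5 0 i + 0 * w6 0 i.
    move=> i; rewrite -y0 !mxE !big_ord_recr big_ord0 /= !mxE /=.
    have -> : widen_ord (leqnSn 2) (widen_ord (leqnSn 1) ord_max) = p0 by apply: val_inj.
    have -> : widen_ord (leqnSn 2) ord_max = p1 by apply: val_inj.
    have -> : (ord_max : 'I_3) = p2 by apply: val_inj.
    ring.
  move=> /H {}H.
  have := H o0 o0; have := H o1 o1; have := H o0 o1; rewrite [LHS]mxE [RHS]mxE /= => e2.
  rewrite [LHS]mxE [RHS]mxE /= => e1; rewrite [LHS]mxE [RHS]mxE /= => e0.
  have q3 (q : 'I_3) : [\/ q = p0, q = p1 | q = p2].
    by case: q => [[|[|[|//]]] ?]; [constructor 1|constructor 2|constructor 3]; apply: val_inj.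
  by apply/rowP => q; rewrite [RHS]mxE; case: (q3 q) => ->.
have [f [finj fu]] := sel3 rq.
pose Nt := invmx (rowsub f Cqt) *m rowsub f Cbt.
pose Cb := Cbt - Cqt *m Nt.
have Cbf : rowsub f Cb = 0.
  by rewrite /Cb rowsubE mulmxBr mulmxA -!rowsubE /Nt mulmxA mulmxV // mul1mx subrr.
pose z i := row i Cb == 0.
have Cbe (i : 'I_r) q : Cb i q = Cbt i q - (w1 0 i * Nt p0 q + w2 0 i * Nt p1 q + w3 0 i * Nt p2 q).
  by rewrite /Cb !mxE sum3 !mxE.
clearbody Nt Cb.
have [s0 [hs0 hgen]] := gen (fun i => Cb i p0) (fun i => Cb i p1) (fun i => Cb i p2).
pose d0 := \row_i (s0 * Cb i p0 + s0 ^+ 2 * Cb i p1 + Cb i p2).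
pose da := \row_i Cb i p0.
pose db := \row_i Cb i p1.
pose g k := - (s0 * Nt k p0 + s0 ^+ 2 * Nt k p1 + Nt k p2).
have hX0 : P *m diag_mx d0 *m Q = Gm (g p0) (g p1) (g p2) s0 (s0 ^+ 2) 1.
  by apply: LinP => i; rewrite /d0 mxE !Cbe !mxE /= /g; ring.
have hXa : P *m diag_mx da *m Q = Gm (- Nt p0 p0) (- Nt p1 p0) (- Nt p2 p0) 1 0 0.
  by apply: LinP => i; rewrite mxE !Cbe !mxE /=; ring.
have hXb : P *m diag_mx db *m Q = Gm (- Nt p0 p1) (- Nt p1 p1) (- Nt p2 p1) 0 1 0.
  by apply: LinP => i; rewrite mxE !Cbe !mxE /=; ring.
pose Y := Ym s0 (g p0) (g p1) (g p2).
have XY : P *m diag_mx d0 *m Q *m Y = 1%:M by rewrite hX0; exact: X0Y.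
have zd i : z i -> [/\ d0 0 i = 0, da 0 i = 0 & db 0 i = 0].
  move=> /eqP/rowP hz; have e q : Cb i q = 0 by have := hz q; rewrite !mxE.
  by rewrite !mxE !e !mulr0 !addr0.
have nzd i : ~~ z i -> d0 0 i != 0.
  move=> nz; rewrite mxE; apply: hgen; apply: contraR nz.
  move=> /norP [/norP [/negPn/eqP a0 /negPn/eqP b0] /negPn/eqP c0].
  by apply/eqP/rowP => q; rewrite !mxE; case: (q3 q) => ->.
have fz j : z (f j) by rewrite /z -row_rowsub Cbf row0.
have := strassen r8 finj fz zd nzd XY; rewrite hXa hXb.
have [k02 [k03 [k12 [k13 [k20 [k22 k23]]]]]] :=
  Kvals (- Nt p0 p0) (- Nt p1 p0) (- Nt p2 p0) (- Nt p0 p1) (- Nt p1 p1) (- Nt p2 p1)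
        (g p0) (g p1) (g p2) hs0.
have := rank3 (invr_neq0 hs0) k02 k03 k12 k13 k20 k22 k23.
by move=> A B; have := leq_trans A B.
Qed.
End D.

Close Scope ring_scope.

Theorem proposition3p6 (R : realType) :
  drk2 (T_quartic R) 9 /\ sdrk2 (T_quartic R) 9.
Proof.
split; split.
- exact: sd_d (ub R).
- by move=> m [s [<- hs]]; exact: lb hs.
- exact: ub.
- by move=> m /sd_d [s [<- hs]]; exact: lb hs.
Qed.
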